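(* Let $G$ be a finite-dimensional $\mathbb{F}_p$-vector space, $V\le G$ a subspace, and $\beta:G\times G\to\mathbb{F}_p^r$ a bilinear map such that $\beta|_{V\times V}$ has rank at least $s$. Fix a coset $a+V$ and let $B=\{(x,y)\in(a+V)\times V:\beta(x,y)=0\}$. Let $S\le V$ be a subspace of codimension $d$ and let $k$ be a positive integer. Then \[(S\cap B_{x_1\cdot}\cap\dots\cap B_{x_k\cdot})+(S\cap B_{y_1\cdot}\cap\dots\cap B_{y_k\cdot})=S\] holds for all but at most $81p^{2d+4kr-s/4}|V|^{2k}$ choices of $(x_1,\dots,x_k,y_1,\dots,y_k)\in(a+V)^{2k}$.
   Context: For $x\in a+V$, $B_{x\cdot}=\{y\in V:(x,y)\in B\}$. A bilinear map $\gamma:V\times V\to\mathbb{F}_p^r$ has rank at least $s$ if for every nonzero $\lambda\in\mathbb{F}_p^r$ the bilinear form $\lambda\cdot\gamma$ has rank at least $s$ on $V\times V$. *)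

(* Defs.v *)
From HB Require Import structures.
From mathcomp Require Import all_boot all_order all_algebra all_field.
From mathcomp Require Import all_classical all_reals all_analysis.
Set Implicit Arguments. Unset Strict Implicit. Unset Printing Implicit Defensive.
Import Order.TTheory GRing.Theory Num.Theory.
Local Open Scope ring_scope.

(* The ambient space G is modelled as 'rV['F_p]_n (every finite-dimensional
   F_p-space is isomorphic to one of these); F_p^r is 'rV['F_p]_r. *)

Definition bilinear_map (p n r : nat)
  (beta : 'rV['F_p]_n -> 'rV['F_p]_n -> 'rV['F_p]_r) : Prop :=
  (forall (a : 'F_p) x1 x2 y, beta (a *: x1 + x2) y = a *: beta x1 y + beta x2 y) /\
  (forall (a : 'F_p) x y1 y2, beta x (a *: y1 + y2) = a *: beta x y1 + beta x y2).

Definition form_rank_on (p n : nat) (V : {vspace 'rV['F_p]_n})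
  (w : 'rV['F_p]_n -> 'rV['F_p]_n -> 'F_p) : nat :=
  \rank (\matrix_(i < \dim V, j < \dim V) w (tnth (vbasis V) i) (tnth (vbasis V) j)).

Definition dot_form (p n r : nat) (lam : 'rV['F_p]_r)
  (beta : 'rV['F_p]_n -> 'rV['F_p]_n -> 'rV['F_p]_r) :=
  fun x y => \sum_(i < r) lam 0 i * beta x y 0 i.

Definition rank_at_least_on (p n r : nat) (V : {vspace 'rV['F_p]_n})
  (beta : 'rV['F_p]_n -> 'rV['F_p]_n -> 'rV['F_p]_r) (s : nat) : Prop :=
  forall lam : 'rV['F_p]_r, lam != 0 -> (s <= form_rank_on V (dot_form lam beta))%N.

Definition vset (p n : nat) (U : {vspace 'rV['F_p]_n}) : {set 'rV['F_p]_n} :=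
  [set v | v \in U].

Definition in_coset (p n : nat) (a : 'rV['F_p]_n) (V : {vspace 'rV['F_p]_n}) x :=
  (x - a) \in V.

Definition Bsec (p n r : nat) (V : {vspace 'rV['F_p]_n})
  (beta : 'rV['F_p]_n -> 'rV['F_p]_n -> 'rV['F_p]_r) (x : 'rV['F_p]_n) :
  {set 'rV['F_p]_n} := [set y | (y \in V) && (beta x y == 0)].

Definition Sint (p n r k : nat) (V S : {vspace 'rV['F_p]_n})
  (beta : 'rV['F_p]_n -> 'rV['F_p]_n -> 'rV['F_p]_r) (x : {ffun 'I_k -> 'rV['F_p]_n}) :
  {set 'rV['F_p]_n} := vset S :&: \bigcap_(i < k) Bsec V beta (x i).

Definition minksum (p n : nat) (A C : {set 'rV['F_p]_n}) : {set 'rV['F_p]_n} :=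
  [set u + w | u in A, w in C].

(* Main.v *)
Require Import Defs.
From HB Require Import structures.
From mathcomp Require Import all_boot all_order all_algebra all_field.
From mathcomp Require Import all_classical all_reals all_analysis.
From mathcomp Require Import zify.
Import Order.TTheory GRing.Theory Num.Theory.
Local Open Scope ring_scope.
Set Implicit Arguments. Unset Strict Implicit.

Section Tool.
Variables (p n : nat).
Local Notation F := 'F_p.
Local Notation E := 'rV[F]_n.

Definition Um (U : {vspace E}) : 'M[F]_(\dim U, n) := \matrix_(i < \dim U) (vbasis U)`_i.
Definition cU (U : {vspace E}) (v : E) : 'rV[F]_(\dim U) := \row_i coord (vbasis U) i v.

Lemma Um_mul (U : {vspace E}) (c : 'rV[F]_(\dim U)) : c *m Um U = \sum_i c 0 i *: (vbasis U)`_i.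
Proof. by rewrite mulmx_sum_row; apply: eq_bigr => i _; rewrite rowK. Qed.

Lemma cUK (U : {vspace E}) (v : E) : v \in U -> cU U v *m Um U = v.
Proof.
move=> vU; rewrite Um_mul {2}(coord_vbasis vU); apply: eq_bigr => i _.
by rewrite mxE.
Qed.

Lemma Um_mem (U : {vspace E}) (c : 'rV[F]_(\dim U)) : c *m Um U \in U.
Proof.
rewrite Um_mul; apply: memv_suml => i _; apply: memvZ.
by apply: vbasis_mem; apply: mem_nth; rewrite size_tuple.
Qed.

Lemma Um_free (U : {vspace E}) : row_free (Um U).
Proof.
rewrite -kermx_eq0; apply/eqP/row_matrixP => i; rewrite row0.
have: row i (kermx (Um U)) *m Um U = 0.
  by apply/eqP; rewrite -sub_kermx row_sub.
rewrite Um_mul => H.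
have /freeP H2 := basis_free (vbasisP U).
apply/rowP => j; rewrite [RHS]mxE.
exact: (H2 (fun j => row i (kermx (Um U)) 0 j) H j).
Qed.

Lemma mem_Um (U : {vspace E}) (v : E) : (v \in U) = (v <= Um U)%MS.
Proof.
apply/idP/idP.
  by move=> /cUK <-; apply: submxMl.
by case/submxP => D ->; apply: Um_mem.
Qed.

Lemma card_submx m k (A : 'M[F]_(k, m)) :
  #|[set c : 'rV[F]_m | (c <= A)%MS]| = (#|F| ^ \rank A)%N.
Proof.
have -> : [set c : 'rV[F]_m | (c <= A)%MS] =
   [set d *m row_base A | d : 'rV[F]_(\rank A)].
  apply/setP => c; rewrite inE; apply/idP/imsetP.
    by rewrite -(eq_row_base A) => /submxP [d ->]; exists d.
  by case=> d _ ->; rewrite -(eq_row_base A) submxMl.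
rewrite card_imset; last exact: row_free_inj (row_base_free A).
by rewrite card_mx mul1n.
Qed.

Lemma card_vset (U : {vspace E}) : #|vset U| = (#|F| ^ \dim U)%N.
Proof.
have -> : vset U = [set c *m Um U | c : 'rV[F]_(\dim U)].
  apply/setP => v; rewrite inE; apply/idP/imsetP.
    by move=> /cUK <-; exists (cU U v).
  by case=> c _ ->; apply: Um_mem.
rewrite card_imset; last exact: row_free_inj (Um_free U).
by rewrite card_mx mul1n.
Qed.

End Tool.
Section Dual.
Variables (F : fieldType) (n : nat).

Definition Orth k (A : 'M[F]_(k, n)) : 'M[F]_n := kermx A^T.

Lemma Orth_sub k1 k2 l (A : 'M[F]_(k1, n)) (B : 'M[F]_(k2, n)) (C : 'M[F]_(l, n)) :
  (A <= B)%MS -> (C <= Orth B)%MS -> (C <= Orth A)%MS.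
Proof.
case/submxP => D ->; rewrite /Orth !sub_kermx trmx_mul mulmxA => /eqP ->.
by rewrite mul0mx.
Qed.

Lemma Orth_rank k (A : 'M[F]_(k, n)) : \rank (Orth A) = (n - \rank A)%N.
Proof. by rewrite /Orth mxrank_ker mxrank_tr. Qed.

Lemma Orth_add k1 k2 (A : 'M[F]_(k1, n)) (B : 'M[F]_(k2, n)) :
  (Orth (A + B)%MS == Orth A :&: Orth B)%MS.
Proof.
apply/andP; split.
  rewrite sub_capmx; apply/andP; split.
    by apply: (Orth_sub (addsmxSl A B)).
  by apply: (Orth_sub (addsmxSr A B)).
have H1 : (A + B <= col_mx A B)%MS by rewrite addsmxE.
apply: (Orth_sub H1).
rewrite /Orth sub_kermx tr_col_mx mul_mx_row.
have /eqP -> : (Orth A :&: Orth B)%MS *m A^T == 0.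
  by rewrite -sub_kermx capmxSl.
have /eqP -> : (Orth A :&: Orth B)%MS *m B^T == 0.
  by rewrite -sub_kermx capmxSr.
by rewrite row_mx0.
Qed.

Lemma Orth_Orth k (A : 'M[F]_(k, n)) : (Orth (Orth A) == A)%MS.
Proof.
suff: (A == Orth (Orth A))%MS by move/eqmxP/eqmx_sym/eqmxP.
have sub : (A <= Orth (Orth A))%MS.
  rewrite /Orth sub_kermx -(trmxK A) -trmx_mul trmxK.
  have /eqP -> : kermx A^T *m A^T == 0 by rewrite -sub_kermx.
  by rewrite trmx0.
rewrite -(eq_leqif (mxrank_leqif_eq sub)) !Orth_rank.
have := rank_leq_col A; move=> h; apply/eqP; rewrite subKn //.
Qed.

Lemma dual m (Sm : 'M[F]_(m, n)) (G1 G2 : 'M[F]_n) :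
  ~~ (Sm <= (Sm :&: Orth G1) + (Sm :&: Orth G2))%MS ->
  exists g1 g2 : 'rV[F]_n,
    [/\ (g1 <= G1)%MS, (g2 <= G2)%MS, g1 != 0 & (g1 - g2) *m Sm^T == 0].
Proof.
move=> nsub.
set OS := Orth Sm.
set T1 := (OS + G1)%MS; set T2 := (OS + G2)%MS.
set U1 := (Sm :&: Orth G1)%MS; set U2 := (Sm :&: Orth G2)%MS.
have eU (G : 'M[F]_n) : (Sm :&: Orth G == Orth (OS + G)%MS)%MS.
  case/andP: (Orth_Orth Sm) => o1 o2.
  case/andP: (Orth_add OS G) => a1 a2.
  apply/andP; split.
    apply: submx_trans a2; rewrite sub_capmx capmxSr andbT.
    exact: submx_trans (capmxSl _ _) o2.
  apply: (submx_trans a1); rewrite sub_capmx capmxSr andbT.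
  exact: submx_trans (capmxSl _ _) o1.
have rU1 : \rank U1 = (n - \rank T1)%N by rewrite (eqmx_rank (eU G1)) Orth_rank.
have rU2 : \rank U2 = (n - \rank T2)%N by rewrite (eqmx_rank (eU G2)) Orth_rank.
have rU12 : \rank (U1 :&: U2)%MS = (n - \rank (T1 + T2)%MS)%N.
  case/andP: (eU G1) => e11 e12; case/andP: (eU G2) => e21 e22.
  case/andP: (Orth_add T1 T2) => f1 f2.
  rewrite -Orth_rank; apply: eqmx_rank; apply/andP; split.
    apply: submx_trans f2; rewrite sub_capmx; apply/andP; split.
      exact: submx_trans (capmxSl _ _) e11.
    exact: submx_trans (capmxSr _ _) e21.
  apply: (submx_trans f1); rewrite sub_capmx; apply/andP; split.
    exact: submx_trans (capmxSl _ _) e12.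
  exact: submx_trans (capmxSr _ _) e22.
have sc1 := mxrank_sum_cap U1 U2.
have sc2 := mxrank_sum_cap T1 T2.
have rOS : \rank OS = (n - \rank Sm)%N by rewrite Orth_rank.
have sUS : (U1 + U2 <= Sm)%MS by rewrite addsmx_sub !capmxSl.
have lt : (\rank (U1 + U2)%MS < \rank Sm)%N.
  by rewrite (ltn_leqif (mxrank_leqif_sup sUS)).
have h1 := rank_leq_col T1; have h2 := rank_leq_col T2.
have h3 := rank_leq_col (T1 + T2)%MS; have h4 := rank_leq_col Sm.
have h5 := rank_leq_col (T1 :&: T2)%MS.
have nsub2 : ~~ (T1 :&: T2 <= OS)%MS.
  apply/negP => /mxrankS; rewrite rOS.
  move: lt; rewrite rU1 rU2 rU12 in sc1 *; lia.
have [i Hi] : exists i, ~~ (row i (T1 :&: T2) <= OS)%MS.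
  apply/existsP; rewrite -negb_forall; apply: contra nsub2 => /forallP H.
  by apply/row_subP => i; exact: H.
have w1 : (row i (T1 :&: T2) <= T1)%MS := submx_trans (row_sub _ _) (capmxSl _ _).
have w2 : (row i (T1 :&: T2) <= T2)%MS := submx_trans (row_sub _ _) (capmxSr _ _).
case/sub_addsmxP: w1 => [[a1 b1] /= e1].
case/sub_addsmxP: w2 => [[a2 b2] /= e2].
exists (b1 *m G1), (b2 *m G2); split; rewrite ?submxMl //.
  apply: contra Hi => /eqP b0; rewrite e1 b0 addr0 submxMl //.
have : (b1 *m G1 - b2 *m G2 <= OS)%MS.
  have -> : b1 *m G1 - b2 *m G2 = a2 *m OS - a1 *m OS.
    have -> : b1 *m G1 = row i (T1 :&: T2)%MS - a1 *m OS.
      by rewrite e1 [a1 *m OS + _]addrC addrK.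
    have -> : b2 *m G2 = row i (T1 :&: T2)%MS - a2 *m OS.
      by rewrite e2 [a2 *m OS + _]addrC addrK.
    by rewrite opprB addrC addrA subrK.
  by apply: addmx_sub; rewrite ?eqmx_opp submxMl.
by rewrite /OS /Orth sub_kermx.
Qed.

End Dual.
Section Bil.
Variables (p n r : nat).
Local Notation F := 'F_p.
Local Notation E := 'rV[F]_n.
Variable beta : E -> E -> 'rV[F]_r.
Hypothesis hbeta : bilinear_map beta.

Lemma bR_add x y1 y2 : beta x (y1 + y2) = beta x y1 + beta x y2.
Proof. by have := hbeta.2 1 x y1 y2; rewrite !scale1r. Qed.
Lemma bR_0 x : beta x 0 = 0.
Proof. by have := bR_add x 0 0; rewrite addr0 => /eqP; rewrite -{1}[beta x 0]addr0 => /eqP /addrI. Qed.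
Lemma bR_scale x a y : beta x (a *: y) = a *: beta x y.
Proof. by have := hbeta.2 a x y 0; rewrite addr0 bR_0 addr0. Qed.
Lemma bR_sum x m (f : 'I_m -> E) : beta x (\sum_i f i) = \sum_i beta x (f i).
Proof. exact: (big_morph (beta x) (bR_add x) (bR_0 x)). Qed.
Lemma bL_add x1 x2 y : beta (x1 + x2) y = beta x1 y + beta x2 y.
Proof. by have := hbeta.1 1 x1 x2 y; rewrite !scale1r. Qed.
Lemma bL_0 y : beta 0 y = 0.
Proof. by have := bL_add 0 0 y; rewrite addr0 => /eqP; rewrite -{1}[beta 0 y]addr0 => /eqP /addrI. Qed.
Lemma bL_scale a x y : beta (a *: x) y = a *: beta x y.
Proof. by have := hbeta.1 a x 0 y; rewrite addr0 bL_0 addr0. Qed.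
Lemma bL_sub x1 x2 y : beta (x1 - x2) y = beta x1 y - beta x2 y.
Proof.
have := hbeta.1 (-1) x2 x1 y; rewrite !scaleN1r => H.
by rewrite addrC H addrC.
Qed.

Lemma dfL_sub (l : 'rV[F]_r) x1 x2 y :
  dot_form l beta (x1 - x2) y = dot_form l beta x1 y - dot_form l beta x2 y.
Proof.
rewrite /dot_form -sumrB; apply: eq_bigr => i _.
by rewrite bL_sub !mxE mulrBr.
Qed.

Definition gvec x (l : 'I_r) : E := \row_j (beta x 'e_j) 0 l.

Lemma beta_g x z l : beta x z 0 l = (z *m (gvec x l)^T) 0 0.
Proof.
rewrite {1}(row_sum_delta z) bR_sum summxE mxE; apply: eq_bigr => j _.
by rewrite bR_scale !mxE.
Qed.

End Bil.
Section Bad.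
Variables (p n r k : nat).
Local Notation F := 'F_p.
Local Notation E := 'rV[F]_n.
Variable beta : E -> E -> 'rV[F]_r.
Hypothesis hbeta : bilinear_map beta.
Variables (V S : {vspace E}).
Hypothesis hSV : (S <= V)%VS.

Lemma sum_lines (I : finType) (g : I -> 'rV[F]_n) (w : 'rV[F]_n) :
  (w <= \sum_i <<g i>>%MS)%MS -> exists c : I -> F, w = \sum_i c i *: g i.
Proof.
case/sub_sumsmxP => u ->.
exists (fun i => ((u i *m <<g i>>%MS) *m pinvmx (g i)) 0 0).
apply: eq_bigr => i _.
have sub : (u i *m <<g i>>%MS <= g i)%MS by rewrite -(genmxE (g i)) submxMl.
by rewrite -{1}(mulmxKpV sub) {1}[_ *m pinvmx _]mx11_scalar mul_scalar_mx.
Qed.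

Lemma line_in (I : finType) (g : I -> 'rV[F]_n) i : (g i <= \sum_j <<g j>>%MS)%MS.
Proof. by apply: (sumsmx_sup i) => //; rewrite genmxE. Qed.

Lemma Orth_rowP (A : 'M[F]_n) (z : 'rV[F]_n) :
  reflect (forall g : 'rV[F]_n, (g <= A)%MS -> z *m g^T = 0) (z <= Orth A)%MS.
Proof.
apply: (iffP idP).
  move=> H g gA; apply/eqP; rewrite -sub_kermx.
  exact: (Orth_sub gA H).
move=> H; rewrite /Orth sub_kermx; apply/eqP/rowP => j.
rewrite [RHS]mxE; transitivity ((z *m (row j A)^T) 0 0); last first.
  by rewrite (H _ (row_sub j A)) mxE.
by rewrite !mxE; apply: eq_bigr => t _; rewrite !mxE.
Qed.

Definition Gsp (X : {ffun 'I_k -> E}) : 'M[F]_n :=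
  (\sum_(il : 'I_k * 'I_r) <<gvec beta (X il.1) il.2>>%MS)%MS.

Lemma inOrthG X z : (z <= Orth (Gsp X))%MS = [forall i, beta (X i) z == 0].
Proof.
apply/Orth_rowP/forallP.
  move=> H i; apply/eqP/rowP => l; rewrite [RHS]mxE (beta_g hbeta).
  by rewrite (H _ (line_in (fun il : 'I_k * 'I_r => gvec beta (X il.1) il.2) (i, l))) mxE.
move=> H g /sum_lines [c ->].
rewrite linear_sum mulmx_sumr big1 // => il _.
rewrite linearZ /= -scalemxAr [z *m _]mx11_scalar -(beta_g hbeta).
rewrite (eqP (H il.1)) mxE; apply/matrixP => a b; rewrite !mxE; by case: (a == b); rewrite ?mulr0n ?mulr1n ?mulr0.
Qed.

Lemma Sint_eq X :
  Sint V S beta X = [set z | (z <= (Um S :&: Orth (Gsp X))%MS)%MS].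
Proof.
apply/setP => z; rewrite /Sint !inE sub_capmx -mem_Um inOrthG.
case zS: (z \in S) => //=.
have zV : z \in V by apply: (subvP hSV).
apply/bigcapP/forallP => H i.
  by have := H i isT; rewrite inE zV.
by rewrite inE zV H.
Qed.

Lemma minksum_eq (A B : 'M[F]_n) :
  minksum [set z | (z <= A)%MS] [set z | (z <= B)%MS] = [set z | (z <= A + B)%MS].
Proof.
apply/setP => z; rewrite inE; apply/imset2P/idP.
  case=> u w; rewrite !inE => hu hw ->.
  by apply: addmx_sub; [apply: submx_trans hu (addsmxSl _ _) | apply: submx_trans hw (addsmxSr _ _)].
case/sub_addsmxP => [[u1 u2] /= ->].
by exists (u1 *m A) (u2 *m B); rewrite ?inE ?submxMl.
Qed.

Lemma sum_dot (X : {ffun 'I_k -> E}) (c : 'I_k * 'I_r -> F) z :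
  (z *m (\sum_il c il *: gvec beta (X il.1) il.2)^T) 0 0 =
  \sum_i dot_form (row i (\matrix_(i, l) c (i, l))) beta (X i) z.
Proof.
rewrite linear_sum mulmx_sumr summxE /dot_form pair_bigA /=.
apply: eq_bigr => [[i l]] _ /=.
rewrite linearZ /= -scalemxAr mxE -(beta_g hbeta) !mxE //.
Qed.

Lemma bad X Y : minksum (Sint V S beta X) (Sint V S beta Y) != vset S ->
  exists lam mu : 'M[F]_(k, r), lam != 0 /\
   (forall z, z \in S -> \sum_i dot_form (row i lam) beta (X i) z =
                         \sum_i dot_form (row i mu) beta (Y i) z).
Proof.
rewrite !Sint_eq minksum_eq => neq.
have nsub : ~~ (Um S <= (Um S :&: Orth (Gsp X)) + (Um S :&: Orth (Gsp Y)))%MS.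
  apply: contra neq => H; apply/eqP/setP => z; rewrite !inE mem_Um.
  apply/idP/idP => [|zS]; last exact: submx_trans zS H.
  by move/submx_trans; apply; rewrite addsmx_sub !capmxSl.
case: (dual nsub) => g1 [g2 [hg1 hg2 g1n0 hS]].
case/sum_lines: hg1 => c1 e1; case/sum_lines: hg2 => c2 e2.
exists (\matrix_(i, l) c1 (i, l)), (\matrix_(i, l) c2 (i, l)); split.
  apply: contra g1n0 => /eqP H; rewrite e1 big1 // => il _.
  have : (\matrix_(i, l) c1 (i, l)) il.1 il.2 = 0 by rewrite H mxE.
  by rewrite mxE -surjective_pairing => ->; rewrite scale0r.
move=> z zS.
rewrite -!sum_dot -e1 -e2.
have zm := cUK zS.
have : z *m (g1 - g2)^T = 0.
  by rewrite -zm -mulmxA -[Um S]trmxK -trmx_mul (eqP hS) trmx0 mulmx0.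
rewrite linearB /= mulmxBr => /eqP; rewrite subr_eq0 => /eqP ->.
by [].
Qed.

End Bad.
Lemma card_ffun_in (T : finType) (k : nat) (A : 'I_k -> {set T}) :
  #|[set f : {ffun 'I_k -> T} | [forall i, f i \in A i]]| = (\prod_i #|A i|)%N.
Proof.
have := card_family (fun i => mem (A i)).
rewrite foldrE big_map big_enum /= => <-.
apply: eq_card => f; rewrite inE; apply/forallP/familyP => H i; exact: H.
Qed.

Section KB.
Variables (p n r : nat).
Local Notation F := 'F_p.
Local Notation E := 'rV[F]_n.
Variable beta : E -> E -> 'rV[F]_r.
Hypothesis hbeta : bilinear_map beta.
Variables (V S : {vspace E}).
Hypothesis hSV : (S <= V)%VS.

Lemma dfR_sum (l : 'rV[F]_r) x m (c : 'I_m -> F) (y : 'I_m -> E) :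
  dot_form l beta x (\sum_i c i *: y i) = \sum_i c i * dot_form l beta x (y i).
Proof.
rewrite /dot_form (bR_sum hbeta).
under [in RHS]eq_bigr do rewrite mulr_sumr.
rewrite exchange_big /=; apply: eq_bigr => t _.
rewrite summxE mulr_sumr; apply: eq_bigr => i _.
by rewrite (bR_scale hbeta) !mxE mulrCA.
Qed.

Lemma dfL_sum (l : 'rV[F]_r) y m (c : 'I_m -> F) (x : 'I_m -> E) :
  dot_form l beta (\sum_i c i *: x i) y = \sum_i c i * dot_form l beta (x i) y.
Proof.
rewrite /dot_form (big_morph (fun x => beta x y) (fun a b => bL_add hbeta a b y) (bL_0 hbeta y)).
under [in RHS]eq_bigr do rewrite mulr_sumr.
rewrite exchange_big /=; apply: eq_bigr => t _.
rewrite summxE mulr_sumr; apply: eq_bigr => i _.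
by rewrite (bL_scale hbeta) !mxE mulrCA.
Qed.

Definition Gram (l : 'rV[F]_r) : 'M[F]_(\dim V) :=
  \matrix_(i < \dim V, j < \dim V)
     dot_form l beta (tnth (vbasis V) i) (tnth (vbasis V) j).

Lemma omega_coord l (c q : 'rV[F]_(\dim V)) :
  dot_form l beta (c *m Um V) (q *m Um V) = (c *m Gram l *m q^T) 0 0.
Proof.
rewrite !Um_mul (dfL_sum l _ (fun i => c 0 i) (fun i => (vbasis V)`_i)).
under eq_bigr => i _ do rewrite (dfR_sum l _ (fun i => q 0 i) (fun i => (vbasis V)`_i)) mulr_sumr.
rewrite mxE exchange_big; apply: eq_bigr => j _.
rewrite !mxE mulr_suml; apply: eq_bigr => i _.
by rewrite /Gram !mxE !(tnth_nth 0) -!mulrA [q 0 j * _]mulrC.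
Qed.

Hypothesis p_pr : prime p.
Variables (s d : nat).
Hypothesis hrank : rank_at_least_on V beta s.
Hypothesis hcodim : (\dim S + d)%N = \dim V.

Lemma K_bound (l : 'rV[F]_r) : l != 0 ->
  (#|[set w | (w \in V) && [forall z, (z \in S) ==> (dot_form l beta w z == 0%R)]]|
     * p ^ s <= p ^ (\dim V + d))%N.
Proof.
move=> l0.
set Q : 'M[F]_(\dim S, \dim V) := \matrix_t cU V ((vbasis S)`_t).
set M := (Gram l *m Q^T).
have sS (t : 'I_(\dim S)) : (vbasis S)`_t \in S.
  by apply: vbasis_mem; apply: mem_nth; rewrite size_tuple.
have QV : Q *m Um V = Um S.
  apply/row_matrixP => t; rewrite row_mul !rowK cUK //.
  exact: (subvP hSV).
have rQ : (\dim S <= \rank Q)%N.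
  have := mxrankM_maxl Q (Um V); rewrite QV.
  by have /eqP -> := Um_free S.
have rG : (s <= \rank (Gram l))%N by exact: hrank.
have rM := mxrank_mul_min (Gram l) Q^T; rewrite mxrank_tr in rM.
have sub : [set w | (w \in V) && [forall z, (z \in S) ==> (dot_form l beta w z == 0)]]
   \subset [set c *m Um V | c in [set c : 'rV[F]_(\dim V) | (c <= kermx M)%MS]].
  apply/fintype.subsetP => w; rewrite inE => /andP [wV /forallP H].
  apply/imsetP; exists (cU V w); last by rewrite cUK.
  rewrite inE sub_kermx /M mulmxA; apply/eqP/rowP => t.
  have := H ((vbasis S)`_t); rewrite sS /= => /eqP.
  have et : (vbasis S)`_t = row t Q *m Um V by rewrite -row_mul QV rowK.
  rewrite -{1}(cUK wV) et omega_coord => e; rewrite [RHS]mxE -e.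
  by rewrite !mxE; apply: eq_bigr => j _; rewrite !mxE.
have := subset_leq_card sub => h1.
have h2 : (#|[set c *m Um V | c in [set c : 'rV[F]_(\dim V) | (c <= kermx M)%MS]]|
    <= p ^ (\dim V - \rank M))%N.
  apply: leq_trans (leq_imset_card _ _) _.
  have e := card_submx (kermx M); rewrite card_Fp // mxrank_ker in e.
  exact: eq_leq e.
have h3 : (\dim V - \rank M + s <= \dim V + d)%N.
  rewrite -/M in rM; have := rank_leq_col (Gram l); lia.
apply: leq_trans (_ : p ^ (\dim V - \rank M) * p ^ s <= _)%N.
  by rewrite leq_mul2r (leq_trans h1 h2) orbT.
by rewrite -expnD leq_pexp2l // prime_gt0.
Qed.

End KB.
Section Fib.
Variables (p n r k : nat).
Local Notation F := 'F_p.
Local Notation E := 'rV[F]_n.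
Variable beta : E -> E -> 'rV[F]_r.
Hypothesis hbeta : bilinear_map beta.
Variables (V S : {vspace E}).
Hypothesis hSV : (S <= V)%VS.
Hypothesis p_pr : prime p.
Variables (s d : nat).
Hypothesis hrank : rank_at_least_on V beta s.
Hypothesis hcodim : (\dim S + d)%N = \dim V.
Variable a : E.
Hypothesis hk : (0 < k)%N.

Definition coset : {set E} := [set x | in_coset a V x].

Definition condE (lam mu : 'M[F]_(k, r)) (t : {ffun 'I_k -> E} * {ffun 'I_k -> E}) : bool :=
  [forall z, (z \in S) ==> (\sum_i dot_form (row i lam) beta (t.1 i) z ==
                            \sum_i dot_form (row i mu) beta (t.2 i) z)].

Definition Ev lam mu := [set t : {ffun 'I_k -> E} * {ffun 'I_k -> E} |
  [forall i, in_coset a V (t.1 i) && in_coset a V (t.2 i)] && condE lam mu t].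

Lemma card_coset : #|coset| = #|vset V|.
Proof.
have -> : coset = [set v + a | v in vset V].
  apply/setP => x; rewrite !inE /in_coset; apply/idP/imsetP.
    by move=> h; exists (x - a); rewrite ?inE ?subrK.
  by case=> v; rewrite inE => hv ->; rewrite addrK.
by rewrite card_imset //; apply: addIr.
Qed.

Lemma card_C1 : #|[set f : {ffun 'I_k -> E} | [forall i, f i \in coset]]| = (#|vset V| ^ k)%N.
Proof.
by rewrite (card_ffun_in (fun=> coset)) prod_nat_const card_ord card_coset.
Qed.


Lemma Ev_bound lam mu : lam != 0 ->
  (#|Ev lam mu| * p ^ s <= #|vset V| ^ (2 * k) * p ^ d)%N.
Proof.
move=> lam0.
have [j hj] : exists j, row j lam != 0.
  apply/existsP; apply: contraNT lam0 => /existsPn H.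
  apply/eqP/row_matrixP => i; rewrite row0; apply/eqP.
  by move: (H i); rewrite negbK.
set l := row j lam.
set K := [set w | (w \in V) && [forall z, (z \in S) ==> (dot_form l beta w z == 0)]].
have hK : (#|K| * p ^ s <= p ^ (\dim V + d))%N := K_bound hbeta hSV p_pr hrank hcodim hj.
pose pi (t : {ffun 'I_k -> E} * {ffun 'I_k -> E}) :=
  ([ffun i => if i == j then a else t.1 i], t.2).
pose ref tau := if [pick t0 in Ev lam mu | pi t0 == tau] is Some t0 then t0.1 j else 0.
pose phi t := (pi t, t.1 j - ref (pi t)).
pose P1 := [set f : {ffun 'I_k -> E} | [forall i, f i \in (if i == j then [set a] else coset)]].
pose C1 := [set f : {ffun 'I_k -> E} | [forall i, f i \in coset]].
have piE t i : i != j -> (pi t).1 i = t.1 i by move=> /negbTE hi; rewrite /pi /= ffunE hi.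
have diff t t0 : t \in Ev lam mu -> t0 \in Ev lam mu -> pi t = pi t0 -> t.1 j - t0.1 j \in K.
  rewrite !inE => /andP [/forallP c1 /forallP e1] /andP [/forallP c2 /forallP e2] ept.
  have e12 : t.2 = t0.2 by move: (congr1 snd ept).
  have eo i : i != j -> t.1 i = t0.1 i by move=> hi; rewrite -(piE t i hi) -(piE t0 i hi) ept.
  apply/andP; split.
    by case/andP: (c1 j) => h1 _; case/andP: (c2 j) => h2 _; move: (memvB h1 h2); rewrite opprB addrA subrK.
  apply/forallP => z; apply/implyP => zS.
  have := e1 z; rewrite zS /= => /eqP q1.
  have := e2 z; rewrite zS /= -e12 -q1 => /eqP.
  rewrite (bigD1 j) // [in X in _ = X](bigD1 j) //=.
  have -> : \sum_(i < k | i != j) dot_form (row i lam) beta (t0.1 i) z =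
            \sum_(i < k | i != j) dot_form (row i lam) beta (t.1 i) z.
    by apply: eq_bigr => i hi; rewrite eo.
  move/addIr => q; rewrite (dfL_sub hbeta) -/l q subrr //.
have refE t : t \in Ev lam mu ->
    exists t0, [/\ t0 \in Ev lam mu, pi t0 = pi t & ref (pi t) = t0.1 j].
  move=> tE; rewrite /ref; case: pickP => [t0 /andP [h1 /eqP h2] | H].
    by exists t0.
  by move: (H t); rewrite tE eqxx.
have sub : phi @: Ev lam mu \subset finset.setX (finset.setX P1 C1) K.
  apply/fintype.subsetP => y /imsetP [t tE ->].
  have := tE; rewrite inE => /andP [/forallP c1 _].
  rewrite !inE /=.
  case: (refE t tE) => t0 [h1 h2 h3].
  rewrite h3; have := diff t t0 tE h1 (esym h2); rewrite inE => /andP [-> ->]; rewrite !andbT.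
  apply/andP; split; apply/forallP => i.
    rewrite ffunE; case: ifP => _; first by rewrite inE.
    by rewrite inE; case/andP: (c1 i).
  by rewrite inE; case/andP: (c1 i).
have inj : {in Ev lam mu &, injective phi}.
  move=> t t' tE t'E /eqP; rewrite xpair_eqE => /andP [/eqP ep /eqP ed].
  rewrite ep in ed; have ej := addIr _ ed.
  have e2 : t.2 = t'.2 by move: (congr1 snd ep).
  have e1 : t.1 = t'.1.
    apply/ffunP => i; case: (eqVneq i j) => [-> //| hi].
    by rewrite -(piE t i hi) -(piE t' i hi) ep.
  by case: t e1 e2 {tE ep ed ej} => x1 y1; case: t' {t'E} => x2 y2 /= -> ->.
have hc := subset_leq_card sub; rewrite (card_in_imset inj) !cardsX in hc.
have cP1 : #|P1| = (#|vset V| ^ (k - 1))%N.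
  rewrite /P1 (card_ffun_in (fun i => if i == j then [set a] else coset)) (bigD1 j) //=.
  rewrite eqxx cards1 mul1n.
  under eq_bigr => i hi do rewrite (negbTE hi) card_coset.
  rewrite (eq_bigl (fun i => i \in predC1 j)) // prod_nat_const cardC1 card_ord.
  by rewrite subn1.
have hv : #|vset V| = (p ^ \dim V)%N by rewrite card_vset card_Fp.
apply: leq_trans (leq_mul hc (leqnn _)) _; rewrite -mulnA.
apply: leq_trans (leq_mul (leqnn _) hK) _.
rewrite cP1 card_C1 expnD -hv.
have e2 : (2 * k = (k - 1) + k + 1)%N by lia.
by rewrite e2 !expnD expn1 !mulnA.
Qed.
End Fib.
Unset Implicit Arguments. Set Strict Implicit.
Lemma card_bigcup_le (I T : finType) (P : pred I) (A : I -> {set T}) :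
  (#|\bigcup_(i | P i) A i| <= \sum_(i | P i) #|A i|)%N.
Proof.
elim/big_rec2: _ => [|i m U _ IH]; first by rewrite cards0.
by apply: leq_trans (leq_card_setU _ _) _; rewrite leq_add2l.
Qed.

Theorem lemma2p8 (R : realType) (p n r s : nat) (p_pr : prime p)
  (V : {vspace 'rV['F_p]_n})
  (beta : 'rV['F_p]_n -> 'rV['F_p]_n -> 'rV['F_p]_r)
  (hbeta : bilinear_map beta) (hrank : rank_at_least_on V beta s)
  (a : 'rV['F_p]_n) (S : {vspace 'rV['F_p]_n}) (d k : nat)
  (hSV : (S <= V)%VS) (hcodim : (\dim S + d)%N = \dim V) (hk : (0 < k)%N) :
  (#|[set t : {ffun 'I_k -> 'rV['F_p]_n} * {ffun 'I_k -> 'rV['F_p]_n} |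
      [forall i, in_coset a V (t.1 i) && in_coset a V (t.2 i)] &&
      (minksum (Sint V S beta t.1) (Sint V S beta t.2) != vset S)]|%:R : R)
  <= 81 * (p%:R : R) `^ ((2 * d + 4 * k * r)%:R - s%:R / 4)
        * (#|vset V|%:R : R) ^+ (2 * k).
Proof.
set Fail := [set t | _].
set v := #|vset V|.
have sub : Fail \subset \bigcup_(lm : 'M['F_p]_(k, r) * 'M['F_p]_(k, r) | lm.1 != 0%R)
                           Ev beta V S a lm.1 lm.2.
  apply/fintype.subsetP => t; rewrite inE => /andP [hc hf].
  case: (bad hbeta hSV hf) => lam [mu [lam0 H]].
  apply/bigcupP; exists (lam, mu) => //.
  rewrite inE hc /=; apply/forallP => z; apply/implyP => zS.
  by rewrite (H z zS).
have hN : (#|Fail| * p ^ s <= p ^ (2 * (k * r)) * v ^ (2 * k) * p ^ d)%N.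
  have h1 := subset_leq_card sub.
  have h2 := leq_trans h1 (card_bigcup_le _ _ _ _).
  apply: leq_trans (leq_mul h2 (leqnn (p ^ s))) _.
  rewrite big_distrl /=.
  apply: (@leq_trans (\sum_(lm : 'M['F_p]_(k, r) * 'M['F_p]_(k, r) | lm.1 != 0%R)
                          (v ^ (2 * k) * p ^ d))%N).
    apply: leq_sum => lm lm0.
    exact: (Ev_bound hbeta hSV p_pr hrank hcodim a hk lm.2 lm0).
  apply: (@leq_trans (\sum_(lm : 'M['F_p]_(k, r) * 'M['F_p]_(k, r))
                          (v ^ (2 * k) * p ^ d))%N).
    by rewrite [X in (_ <= X)%N](bigID (fun lm => lm.1 != 0%R)) /=; exact: leq_addr.
  rewrite sum_nat_const cardE -cardT card_prod card_mx card_Fp // -expnD.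
  by rewrite addnn -mul2n !mulnA.
have p0 : (0 < p%:R :> R) by rewrite ltr0n prime_gt0.
have p1 : (1 <= p%:R :> R) by rewrite ler1n prime_gt0.
have key : (#|Fail|%:R : R) <= p%:R `^ ((2 * (k * r) + d)%:R - s%:R) * v%:R ^+ (2 * k).
  rewrite powRB; last by apply/implyP => _; rewrite gt_eqF.
  rewrite !powR_mulrn ?ler0n //.
  rewrite mulrAC ler_pdivlMr ?exprn_gt0 //.
  rewrite -!natrX -!natrM ler_nat.
  by rewrite expnD mulnAC.
apply: le_trans key _.
apply: ler_wpM2r; first by rewrite exprn_ge0 ?ler0n.
have e12 : (2 * (k * r) + d)%:R - s%:R <= (2 * d + 4 * k * r)%:R - s%:R / 4 :> R.
  apply: lerD; first by rewrite ler_nat; lia.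
  rewrite lerN2 ler_pdivrMr // ler_peMr ?ler0n //.
  by rewrite (ler_nat R 1 4).
apply: le_trans (ler_powR p1 e12) _.
by rewrite ler_peMl ?powR_ge0 // (ler_nat R 1 81).
Qed.
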